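(* Let $X,Y$ be infinite dimensional Banach lattices such that (a) $X,Y$ are relatively $s$-decomposable for some $1\le s\le\infty$; (b) $\ell_p$ is finitely lattice representable in $Y_U$; (c) $\ell_q$ is finitely lattice representable in $X_L$. Then $\frac1p\le\frac1q+\frac1s$.
   Context: Banach lattices are real; disjoint means $|x|\wedge|y|=0$. $X,Y$ are relatively $s$-decomposable if there is $D$ with $\|\sum_{i=1}^n y_i\|_Y\le D(\sum_i(\|y_i\|_Y/\|x_i\|_X)^s)^{1/s}\|\sum_{i=1}^n x_i\|_X$ for all $n$ and all pairwise disjoint nonzero $x_i\in X$, pairwise disjoint nonzero $y_i\in Y$ (max for $s=\infty$). $\ell_r$ is finitely lattice representable in a Banach lattice $Z$ if for every $n$ and $\varepsilon>0$ there are pairwise disjoint $z_1,\dots,z_n\in Z$ with $\|a\|_{\ell_r^n}\le\|\sum a_iz_i\|_Z\le(1+\varepsilon)\|a\|_{\ell_r^n}$ for all $a\in\mathbb R^n$. $\mathfrak B_n(X)$ is the set of $n$-tuples of pairwise disjoint norm-one elements. For $a\in\mathbb R^n$: $\|a\|_{Y_U(n)}:=\sup\{\|\sum a_iy_i\|_Y:(y_i)\in\mathfrak B_n(Y)\}$; $\Phi_n(a):=\inf\{\|\sum a_ix_i\|_X:(x_i)\in\mathfrak B_n(X)\}$; $\|a\|_{X_L(n)}:=\inf\{\sum_{k\in F}\Phi_n(a^k):F\text{ finite}, a=\sum_{k\in F}a^k\}$. $Y_U$, $X_L$ are the Banach lattices (coordinate-wise order) of real sequences with $\|a\|_{Y_U}:=\sup_n\|(a_i)_{i\le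 n}\|_{Y_U(n)}<\infty$, resp. $\|a\|_{X_L}:=\sup_n\|(a_i)_{i\le n}\|_{X_L(n)}<\infty$. *)

(* Defs.v *)
From HB Require Import structures.
From mathcomp Require Import all_boot all_order all_algebra.
From mathcomp Require Import all_classical all_reals all_analysis.
Set Implicit Arguments. Unset Strict Implicit. Unset Printing Implicit Defensive.
Import Order.TTheory GRing.Theory Num.Theory.
Import numFieldNormedType.Exports.
Local Open Scope classical_set_scope.
Local Open Scope ring_scope.

Section BanachLattices.
Variable R : realType.

Record banach_lattice (V : completeNormedModType R)
    (le : V -> V -> Prop) (vjoin : V -> V -> V) : Prop := {
  bl_refl : forall x, le x x;
  bl_antisym : forall x y, le x y -> le y x -> x = y;
  bl_trans : forall x y z, le x y -> le y z -> le x z;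
  bl_add : forall x y z, le x y -> le (x + z) (y + z);
  bl_scale : forall (a : R) x y, 0 <= a -> le x y -> le (a *: x) (a *: y);
  bl_join_ubl : forall x y, le x (vjoin x y);
  bl_join_ubr : forall x y, le y (vjoin x y);
  bl_join_least : forall x y z, le x z -> le y z -> le (vjoin x y) z;
  bl_norm : forall x y, le (vjoin x (- x)) (vjoin y (- y)) -> `|x| <= `|y|
}.

Definition infinite_dim (V : completeNormedModType R) : Prop :=
  forall n : nat, exists v : 'I_n -> V,
    forall c : 'I_n -> R, \sum_(i < n) c i *: v i = 0 -> forall i, c i = 0.

Section Lat.
Variable V : completeNormedModType R.
Variable vjoin : V -> V -> V.

Definition vabs (x : V) : V := vjoin x (- x).
Definition vmeet (x y : V) : V := - vjoin (- x) (- y).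
Definition ldisjoint (x y : V) : Prop := vmeet (vabs x) (vabs y) = 0.
Definition pairwise_disjoint n (x : 'I_n -> V) : Prop :=
  forall i j, i != j -> ldisjoint (x i) (x j).
Definition Bn n : set ('I_n -> V) :=
  [set x | pairwise_disjoint x /\ forall i, `|x i| = 1].

Definition U_n_norm n (a : 'I_n -> R) : \bar R :=
  ereal_sup [set (`|\sum_(i < n) a i *: y i|)%:E | y in @Bn n].
Definition Phi_n n (a : 'I_n -> R) : \bar R :=
  ereal_inf [set (`|\sum_(i < n) a i *: x i|)%:E | x in @Bn n].
Definition L_n_norm n (a : 'I_n -> R) : \bar R :=
  ereal_inf [set t | exists (m : nat) (F : 'I_m -> 'I_n -> R),
    (forall i, a i = \sum_(k < m) F k i) /\ t = (\sum_(k < m) Phi_n (F k))%E].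
(* norms of V_U and V_L on real sequences (finite iff the sequence is in the space) *)
Definition U_norm (a : nat -> R) : \bar R :=
  ereal_sup [set U_n_norm (fun i : 'I_n => a (nat_of_ord i)) | n in [set: nat]].
Definition L_norm (a : nat -> R) : \bar R :=
  ereal_sup [set L_n_norm (fun i : 'I_n => a (nat_of_ord i)) | n in [set: nat]].
End Lat.

Definition lsnorm (r : \bar R) n (a : 'I_n -> R) : R :=
  match r with
  | r'%:E => (\sum_(i < n) `|a i| `^ r') `^ (r'^-1)
  | +oo%E => \big[Num.max/0]_(i < n) `|a i|
  | -oo%E => 0
  end.

Definition einv (r : \bar R) : R :=
  match r with r'%:E => r'^-1 | _ => 0 end.

Definition rel_decomposable (X Y : completeNormedModType R)
    (joinX : X -> X -> X) (joinY : Y -> Y -> Y) (s : \bar R) : Prop :=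
  exists D : R, forall n (x : 'I_n -> X) (y : 'I_n -> Y),
    pairwise_disjoint joinX x -> (forall i, x i != 0) ->
    pairwise_disjoint joinY y -> (forall i, y i != 0) ->
    `|\sum_(i < n) y i| <=
      D * lsnorm s (fun i => `|y i| / `|x i|) * `|\sum_(i < n) x i|.

(* disjointness in the coordinatewise-ordered lattice of real sequences *)
Definition seq_disjoint (z w : nat -> R) : Prop :=
  forall k, Num.min `|z k| `|w k| = 0.

(* ell_r is finitely lattice representable in the sequence lattice with norm N
   (whose elements are the sequences of finite N-norm) *)
Definition fin_lat_rep (r : \bar R) (N : (nat -> R) -> \bar R) : Prop :=
  forall (n : nat) (eps : R), 0 < eps ->
  exists z : 'I_n -> nat -> R,
    (forall i, (N (z i) < +oo)%E) /\
    (forall i j, i != j -> seq_disjoint (z i) (z j)) /\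
    forall a : 'I_n -> R,
      ((lsnorm r a)%:E <= N (fun k => (\sum_(i < n) a i * z i k)%R))%E /\
      (N (fun k => (\sum_(i < n) a i * z i k)%R) <= ((1 + eps) * lsnorm r a)%:E)%E.

End BanachLattices.

(* Main.v *)
Require Import Defs.
From HB Require Import structures.
From mathcomp Require Import all_boot all_order all_algebra.
From mathcomp Require Import all_classical all_reals all_analysis.
Import Order.TTheory GRing.Theory Num.Theory.
Import numFieldNormedType.Exports.
Local Open Scope ring_scope.
From mathcomp Require Import lra ring.
Set Implicit Arguments. Unset Strict Implicit. Unset Printing Implicit Defensive.


Section LatFacts.
Variable R : realType.
Variable V : completeNormedModType R.
Variable le : V -> V -> Prop.
Variable vjoin : V -> V -> V.
Hypothesis H : banach_lattice le vjoin.

Local Notation ab := (vabs vjoin).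

Let lrefl x : le x x := bl_refl H x.
Let ltr {x y z} : le x y -> le y z -> le x z := @bl_trans _ _ _ _ H x y z.
Let ladd {x y} z : le x y -> le (x + z) (y + z) := @bl_add _ _ _ _ H x y z.
Let lanti {x y} : le x y -> le y x -> x = y := @bl_antisym _ _ _ _ H x y.
Let jubl x y : le x (vjoin x y) := bl_join_ubl H x y.
Let jubr x y : le y (vjoin x y) := bl_join_ubr H x y.
Let jleast {x y z} : le x z -> le y z -> le (vjoin x y) z := @bl_join_least _ _ _ _ H x y z.
Let lscale {a : R} {x y} : 0 <= a -> le x y -> le (a *: x) (a *: y) := @bl_scale _ _ _ _ H a x y.

Lemma le_addLR u w v : le (u + w) v <-> le u (v - w).
Proof.
split=> h.
  by have := ladd (- w) h; rewrite addrK.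
by have := ladd w h; rewrite subrK.
Qed.

Lemma le_subLR u w v : le (u - w) v -> le u (v + w).
Proof. by move/le_addLR; rewrite opprK. Qed.

Lemma le_add2 a b c d : le a b -> le c d -> le (a + c) (b + d).
Proof.
move=> h1 h2; apply: (ltr (ladd c h1)).
by rewrite ![b + _]addrC; apply: ladd.
Qed.

Lemma le_opp a b : le a b -> le (- b) (- a).
Proof.
move=> h; have := ladd (- a - b) h.
by rewrite addrA subrr add0r addrCA subrr addr0.
Qed.

Lemma join_comm a b : vjoin a b = vjoin b a.
Proof. by apply: lanti; apply: jleast. Qed.

Lemma abs_ubl x : le x ((ab (x))).
Proof. exact: jubl. Qed.
Lemma abs_ubr x : le (- x) ((ab (x))).
Proof. exact: jubr. Qed.

Lemma absN x : (ab (- x)) = (ab (x)).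
Proof. by rewrite /vabs opprK join_comm. Qed.

Lemma abs_ge0 x : le 0 ((ab (x))).
Proof.
have h := le_add2 (abs_ubl x) (abs_ubr x).
rewrite subrr in h.
have := lscale (_ : 0 <= 2^-1) h.
rewrite scaler0 => h'; apply: (ltr (h' _)); first by rewrite invr_ge0 ler0n.
suff -> : 2^-1 *: ((ab (x)) + (ab (x))) = (ab (x)) by [].
by rewrite -{1 2}[ab x]scale1r -scalerDl scalerA mulVf ?scale1r // pnatr_eq0.
Qed.

Lemma le_oppge0 a : le 0 a -> le (- a) 0.
Proof. by move=> h; have := le_opp h; rewrite oppr0. Qed.

Lemma abs_tri x y : le ((ab (x + y))) ((ab (x)) + (ab (y))).
Proof.
apply: jleast; first exact: le_add2 (abs_ubl _) (abs_ubl _).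
by rewrite opprD; exact: le_add2 (abs_ubr _) (abs_ubr _).
Qed.

Lemma abs_scale a x : le ((ab (a *: x))) (`|a| *: ab x).
Proof.
have [a0|a0] := leP 0 a.
  rewrite ger0_norm //; apply: jleast; first exact: lscale (abs_ubl _).
  by rewrite -scalerN; exact: lscale (abs_ubr _).
have a0' : 0 <= - a by rewrite oppr_ge0 ltW.
rewrite ltr0_norm //; apply: jleast.
  by rewrite -[a *: x]opprK -scalerN -scaleNr; apply: lscale (abs_ubr _).
by rewrite -scaleNr; apply: lscale (abs_ubl _).
Qed.

Lemma abs0 : (ab (0 : V)) = 0.
Proof. by rewrite /vabs oppr0; apply: lanti; [apply: jleast|]. Qed.

Lemma ldisjE x y : ldisjoint vjoin x y <-> vjoin (- (ab (x))) (- (ab (y))) = 0.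
Proof.
rewrite /ldisjoint /vmeet; split; first by move/eqP; rewrite oppr_eq0 => /eqP.
by move=> ->; rewrite oppr0.
Qed.

Lemma ldisj_sym x y : ldisjoint vjoin x y -> ldisjoint vjoin y x.
Proof. by rewrite !ldisjE join_comm. Qed.

Lemma ldisj0 y : ldisjoint vjoin 0 y.
Proof.
apply/ldisjE; rewrite abs0 oppr0; apply: lanti => //.
by apply: jleast => //; exact: le_oppge0 (abs_ge0 _).
Qed.

Lemma ldisj_add x y z : ldisjoint vjoin x y -> ldisjoint vjoin x z ->
  ldisjoint vjoin x (y + z).
Proof.
move=> /ldisjE hy /ldisjE hz; apply/ldisjE.
set a := (ab (x)); set b := (ab (y)); set c := (ab (z)); set J := vjoin _ _.
have a0 := abs_ge0 x; have b0 := abs_ge0 y; have c0 := abs_ge0 z.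
have Ja : le (- a) J by exact: jubl.
have hlow : forall u, le 0 u -> le (- a - u) J.
  move=> u u0; apply: (ltr^~ Ja).
  rewrite -{2}[- a]addr0; apply: le_add2 => //; exact: le_oppge0.
apply: lanti.
  apply: jleast; exact: le_oppge0 (abs_ge0 _).
have -> : (0:V) = vjoin (- a) (- b) + vjoin (- a) (- c) by rewrite hy hz addr0.
apply/le_addLR.
apply: jleast; apply/le_addLR; rewrite addrC; apply/le_addLR; apply: jleast;
  apply: le_subLR.
all: rewrite opprK.
- exact: hlow.
- by rewrite addrC; apply: hlow.
- exact: hlow.
- rewrite addrC -opprD; apply: (ltr^~ (jubr _ _)); apply: le_opp; exact: abs_tri.
Qed.

Lemma ldisj_scale (k : R) x y : ldisjoint vjoin x y -> ldisjoint vjoin (k *: x) y.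
Proof.
move=> /ldisjE h; apply/ldisjE.
set J := vjoin _ _; set mu := `|k| + 1.
have mu1 : 1 <= mu by rewrite lerDr.
have mu0 : 0 < mu by apply: lt_le_trans mu1.
have x0 := abs_ge0 x; have y0 := abs_ge0 y.
apply: lanti; first by apply: jleast; exact: le_oppge0 (abs_ge0 _).
have hJ : le 0 (mu^-1 *: J).
  rewrite -h; apply: jleast.
  - have : le (- (mu *: ab x)) J.
      apply: (ltr^~ (jubl _ _)); apply: le_opp; apply: (ltr (abs_scale k x)).
      by rewrite /mu scalerDl scale1r -{1}[_ *: ab x]addr0; apply: le_add2.
    move/(lscale (_ : 0 <= mu^-1)); rewrite scalerN scalerA mulVf ?gt_eqF //.
    by rewrite scale1r; apply; rewrite invr_ge0 ltW.
  - apply: (@ltr _ (mu^-1 *: - (ab (y)))).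
      rewrite -[X in le X _]add0r; apply/le_addLR.
      rewrite opprK scalerN addrC -[X in X - _]scale1r -scalerBl.
      have := lscale (_ : 0 <= 1 - mu^-1) y0; rewrite scaler0; apply.
      by rewrite subr_ge0 invf_le1.
    by apply: lscale; [rewrite invr_ge0 ltW|exact: jubr].
have := lscale (ltW mu0) hJ.
by rewrite scaler0 scalerA divff ?gt_eqF // scale1r.
Qed.

Lemma ldisj_abs_le x y : ldisjoint vjoin x y -> le (ab x) (ab (x + y)).
Proof.
move=> /ldisjE h.
have e : ab x = vjoin (- ab x) (- ab y) + ab x by rewrite h add0r.
rewrite [X in le X _]e; apply/(le_addLR (vjoin (- ab x) (- ab y))).
apply: jleast.
  apply: (le_subLR (u := - ab x) (w := - ab x)).
  rewrite opprK addNr; exact: abs_ge0.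
apply: (le_subLR (u := - ab y) (w := - ab x)).
rewrite opprK addrC; apply/le_addLR; rewrite opprK.
have := abs_tri (x + y) (- y); rewrite addrK absN.
by [].
Qed.

Lemma ldisj_norm x y : ldisjoint vjoin x y -> `|x| <= `|x + y|.
Proof. by move=> h; apply: (bl_norm H); exact: ldisj_abs_le. Qed.

Lemma ldisj_sum (I J : Type) (r : seq I) (r' : seq J) (P : pred I) (P' : pred J)
  (f : I -> V) (g : J -> V) :
  (forall i j, P i -> P' j -> ldisjoint vjoin (f i) (g j)) ->
  ldisjoint vjoin (\sum_(i <- r | P i) f i) (\sum_(j <- r' | P' j) g j).
Proof.
move=> h.
apply: (big_ind (fun v => ldisjoint vjoin v _)).
- exact: ldisj0.
- move=> u v hu hv; apply: ldisj_sym; apply: ldisj_add; exact: ldisj_sym.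
move=> i Pi.
apply: ldisj_sym; apply: (big_ind (fun v => ldisjoint vjoin v _)).
- exact: ldisj0.
- move=> u v hu hv; apply: ldisj_sym; apply: ldisj_add; exact: ldisj_sym.
by move=> j Pj; apply: ldisj_sym; apply: h.
Qed.

End LatFacts.


Section SetFacts.
Variable R : realType.
Variable V : completeNormedModType R.
Variable vjoin : V -> V -> V.

Lemma Phi_ge0 n (a : 'I_n -> R) : (0 <= Phi_n vjoin a)%E.
Proof. by apply/ereal_infP => _ [x _ <-]; rewrite lee_fin. Qed.

Lemma Phi_le n (a : 'I_n -> R) x : Bn vjoin x ->
  (Phi_n vjoin a <= (`|\sum_i a i *: x i|)%:E)%E.
Proof. by move=> hx; apply: ereal_inf_lbound; exists x. Qed.

Lemma U_n_ge n (a : 'I_n -> R) x : Bn vjoin x ->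
  ((`|\sum_i a i *: x i|)%:E <= U_n_norm vjoin a)%E.
Proof. by move=> hx; apply: ereal_sup_ubound; exists x. Qed.

Lemma U_n_le_U (a : nat -> R) n :
  (U_n_norm vjoin (fun i : 'I_n => a i) <= U_norm vjoin a)%E.
Proof. by apply: ereal_sup_ubound; exists n. Qed.

Lemma L_n_le_L (a : nat -> R) n :
  (L_n_norm vjoin (fun i : 'I_n => a i) <= L_norm vjoin a)%E.
Proof. by apply: ereal_sup_ubound; exists n. Qed.

Lemma L_n_le n (a : 'I_n -> R) m (F : 'I_m -> 'I_n -> R) :
  (forall i, a i = \sum_(k < m) F k i) ->
  (L_n_norm vjoin a <= \sum_(k < m) Phi_n vjoin (F k))%E.
Proof. by move=> h; apply: ereal_inf_lbound; exists m, F. Qed.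

Variable le : V -> V -> Prop.
Hypothesis H : banach_lattice le vjoin.

Lemma disj_scale2 (x y : V) (a b : R) : ldisjoint vjoin x y ->
  ldisjoint vjoin (a *: x) (b *: y).
Proof.
move=> h; apply: (ldisj_scale H); apply: (ldisj_sym H).
by apply: (ldisj_scale H); apply: (ldisj_sym H).
Qed.

Lemma Phi_mono (m M : nat) (hmM : (m <= M)%N) (F : 'I_M -> R) :
  (Phi_n vjoin (fun i : 'I_m => F (widen_ord hmM i)) <= Phi_n vjoin F)%E.
Proof.
apply/ereal_infP => _ [x [xd xn] <-].
have hx : Bn vjoin (fun i : 'I_m => x (widen_ord hmM i)).
  split; last by move=> i; apply: xn.
  by move=> i j ij; apply: xd; apply: contra ij => /eqP [] hij; apply/eqP/val_inj.
apply: le_trans (Phi_le _ hx) _; rewrite lee_fin.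
rewrite (bigID (fun j : 'I_M => (j < m)%N)) /= -(big_ord_narrow (F := fun j => F j *: x j) hmM).
apply: (ldisj_norm H).
apply: (ldisj_sum H) => i j hi hj.
apply: disj_scale2; apply: xd; apply: contraNneq hj => <-; exact: hi.
Qed.

Lemma L_mono (m M : nat) (hmM : (m <= M)%N) (b : nat -> R) :
  (L_n_norm vjoin (fun i : 'I_m => b i) <= L_n_norm vjoin (fun i : 'I_M => b i))%E.
Proof.
apply/ereal_infP => _ [K [F [hF ->]]].
apply: le_trans (L_n_le (F := fun k (i:'I_m) => F k (widen_ord hmM i)) _) _.
  by move=> i; exact: (hF (widen_ord hmM i)).
apply: lee_sum => k _; exact: Phi_mono.
Qed.

End SetFacts.

Section LsFacts.
Variable R : realType.

Lemma bigmaxr_ge (n : nat) (F : 'I_n -> R) i : F i <= \big[Num.max/0]_(j < n) F j.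
Proof.
move: (mem_index_enum i); elim: (index_enum _) => // x s IH.
rewrite in_cons big_cons => /orP [/eqP->| /IH h]; rewrite le_max ?lexx //.
by rewrite h orbT.
Qed.

Lemma bigmaxr_le (n : nat) (F : 'I_n -> R) B : 0 <= B -> (forall j, F j <= B) ->
  \big[Num.max/0]_(j < n) F j <= B.
Proof.
move=> B0 h; apply: (big_ind (fun x => x <= B)) => // x y hx hy.
by rewrite ge_max hx hy.
Qed.

Lemma lsnorm_ge0 (r : \bar R) n (a : 'I_n -> R) : 0 <= lsnorm r a.
Proof.
case: r => [r||] //=; first exact: powR_ge0.
apply: (big_ind (fun x => 0 <= x)) => // x y hx hy; by rewrite le_max hx.
Qed.

Lemma lsnorm_ones (r : \bar R) N : (1 <= r)%E ->
  lsnorm r (fun _ : 'I_N.+1 => 1 : R) = (N.+1)%:R `^ einv r.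
Proof.
case: r => [r||] //= hr.
  by rewrite normr1 powR1 sumr_const card_ord.
rewrite powRr0; apply/le_anti/andP; split.
  by apply: bigmaxr_le => // j; rewrite normr1.
by have := bigmaxr_ge (fun _ : 'I_N.+1 => `|1 : R|) ord0; rewrite normr1.
Qed.

Lemma lsnorm_delta (r : \bar R) n (i : 'I_n) : (1 <= r)%E ->
  lsnorm r (fun j : 'I_n => (j == i)%:R) = 1.
Proof.
case: r => [r||] //= hr.
  have r0 : r != 0 by rewrite lee_fin in hr; apply: lt0r_neq0; apply: lt_le_trans hr.
  rewrite (bigD1 i) //= big1 => [|j /negbTE ->]; last by rewrite normr0 powR0.
  by rewrite eqxx normr1 powR1 addr0 powR1.
apply/le_anti/andP; split.
  by apply: bigmaxr_le => // j; rewrite ger0_norm ?ler0n // lern1 leq_b1.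
by have := bigmaxr_ge (fun j : 'I_n => `|(j == i)%:R : R|) i; rewrite eqxx normr1.
Qed.

Lemma lsnorm_bound (r : \bar R) N n (f : 'I_N -> R) B : (1 <= r)%E -> (N <= n)%N ->
  (0 < n)%N -> 0 <= B -> (forall t, 0 <= f t <= B) ->
  lsnorm r f <= B * n%:R `^ einv r.
Proof.
case: r => [r||] //= hr hNn hn B0 hf; last first.
  rewrite powRr0 mulr1; apply: bigmaxr_le => // j.
  by have /andP[h1 h2] := hf j; rewrite ger0_norm.
rewrite lee_fin in hr.
have r0 : 0 < r by apply: lt_le_trans hr.
have hs : \sum_(t < N) `|f t| `^ r <= n%:R * B `^ r.
  apply: (@le_trans _ _ (\sum_(t < N) B `^ r)).
    apply: ler_sum => t _; have /andP[h1 h2] := hf t.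
    apply: ge0_ler_powR; [exact: ltW|by rewrite nnegrE|by rewrite nnegrE|by rewrite ger0_norm].
  rewrite sumr_const card_ord -[_ *+ N]mulr_natl; apply: ler_wpM2r; first exact: powR_ge0.
  by rewrite ler_nat.
apply: (@le_trans _ _ ((n%:R * B `^ r) `^ r^-1)).
  apply: ge0_ler_powR => //; rewrite ?nnegrE.
  - by rewrite invr_ge0 ltW.
  - by apply: sumr_ge0 => t _; exact: powR_ge0.
  - by apply: mulr_ge0; [exact: ler0n| exact: powR_ge0].
rewrite powRM ?ler0n ?powR_ge0 // -powRrM divff ?gt_eqF // powRr1 //.
by rewrite mulrC.
Qed.

End LsFacts.


Lemma combine (R : realType) (X Y : completeNormedModType R)
  (leX : X -> X -> Prop) (joinX : X -> X -> X)
  (leY : Y -> Y -> Prop) (joinY : Y -> Y -> Y)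
  (HX : banach_lattice leX joinX) (HY : banach_lattice leY joinY)
  (s : \bar R) (hs : (1 <= s)%E) (D : R)
  (hD : forall n (x : 'I_n -> X) (y : 'I_n -> Y),
    pairwise_disjoint joinX x -> (forall i, x i != 0) ->
    pairwise_disjoint joinY y -> (forall i, y i != 0) ->
    `|\sum_(i < n) y i| <=
      D * lsnorm s (fun i => `|y i| / `|x i|) * `|\sum_(i < n) x i|)
  (n K : nat) (hn : (0 < n)%N) (u : 'I_n -> Y) (v : 'I_K -> 'I_n -> X)
  (hu : forall i, `|u i| <= 2) (udisj : pairwise_disjoint joinY u)
  (vdisj : forall k, pairwise_disjoint joinX (v k))
  (hc : forall i, 2^-1 < \sum_k `|v k i|) :
  `|\sum_i u i| <= `|D| * (4 * n%:R `^ einv s) * \sum_k `|\sum_i v k i|.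
Proof.
pose c i := \sum_k `|v k i|.
have c0 i : 0 < c i by apply: lt_trans (hc i); rewrite invr_gt0.
pose yk k i := (`|v k i| / c i) *: u i.
have -> : \sum_i u i = \sum_k \sum_i yk k i.
  rewrite exchange_big; apply: eq_bigr => i _ /=.
  by rewrite /yk -scaler_suml -mulr_suml divff ?scale1r //; exact: lt0r_neq0 (c0 i).
apply: (le_trans (ler_norm_sum _ _ _)).
rewrite mulr_sumr; apply: ler_sum => k _.
pose A := [pred i | (v k i != 0) && (u i != 0)].
have e1 : \sum_i yk k i = \sum_(i in A) yk k i.
  rewrite (bigID (mem A)) /= [X in _ + X]big1 ?addr0 // => i.
  rewrite /yk inE negb_and !negbK => /orP [/eqP-> | /eqP->].
    by rewrite normr0 mul0r scale0r.
  by rewrite scaler0.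
have e2 : `|\sum_(i in A) v k i| <= `|\sum_i v k i|.
  rewrite (bigID (mem A) xpredT) /=; apply: (ldisj_norm HX).
  apply: (ldisj_sum HX) => i j hi hj; apply: vdisj.
  by apply: contraNneq hj => <-.
rewrite e1 big_enum_val.
rewrite big_enum_val in e2.
pose x' := fun t : 'I_#|A| => v k (enum_val t).
pose y' := fun t : 'I_#|A| => yk k (enum_val t).
have hx'0 t : x' t != 0 by have := enum_valP t; rewrite ?inE /= => /andP[].
have hu0 (t : 'I_#|A|) : u (enum_val t) != 0.
  by have := enum_valP t; rewrite ?inE /= => /andP[].
have hxd : pairwise_disjoint joinX x'.
  by move=> t t' tt'; apply: vdisj; apply: contra tt' => /eqP/enum_val_inj ->.
have hyd : pairwise_disjoint joinY y'.
  move=> t t' tt'; apply: (disj_scale2 HY); apply: udisj.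
  by apply: contra tt' => /eqP/enum_val_inj ->.
have hy'0 t : y' t != 0.
  rewrite /y' /yk scaler_eq0 negb_or hu0 andbT mulf_neq0 //.
    by rewrite normr_eq0 hx'0.
  by rewrite invr_neq0 // gt_eqF.
have := hD _ x' y' hxd hx'0 hyd hy'0.
move/le_trans; apply.
have hL : lsnorm s (fun i => `|y' i| / `|x' i|) <= 4 * n%:R `^ einv s.
  apply: lsnorm_bound => //.
  - by apply: leq_trans (max_card _) _; rewrite card_ord.
  - move=> t; rewrite /y' /yk normrZ ger0_norm; last first.
      by apply: divr_ge0 => //; apply: ltW.
    have hh : forall a b d : R, a != 0 -> a / b * d / a = d / b.
      by move=> a b d a0; rewrite mulrAC [a / b / a]mulrAC divff // mul1r mulrC.
    rewrite /x' hh; last by rewrite normr_eq0; exact: hx'0.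
    apply/andP; split; first by apply: divr_ge0 => //; apply: ltW.
    rewrite ler_pdivrMr //; apply: le_trans (hu _) _.
    have := hc (enum_val t); rewrite -/(c _) => h.
    lra.
have L0 := lsnorm_ge0 s (fun i => `|y' i| / `|x' i|).
apply: (@le_trans _ _ (`|D| * lsnorm s (fun i => `|y' i| / `|x' i|) * `|\sum_i x' i|)).
  by apply: ler_wpM2r => //; apply: ler_wpM2r => //; exact: ler_norm.
by apply: ler_pM => //; [apply: mulr_ge0 | apply: ler_wpM2l].
Qed.

Lemma min_norm0 (R : realType) (a b : R) : Num.min `|a| `|b| = 0 -> a = 0 \/ b = 0.
Proof.
rewrite /Num.min; case: ltP => _ /eqP; rewrite normr_eq0 => /eqP; auto.
Qed.

Lemma Yside (R : realType) (Y : completeNormedModType R)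
  (leY : Y -> Y -> Prop) (joinY : Y -> Y -> Y) (HY : banach_lattice leY joinY)
  (p : \bar R) (hp : (1 <= p)%E) (hrep : fin_lat_rep p (U_norm joinY)) (N : nat) :
  exists u : 'I_N.+1 -> Y, (forall i, `|u i| <= 2) /\ pairwise_disjoint joinY u /\
    (N.+1)%:R `^ einv p / 2 < `|\sum_i u i|.
Proof.
have [z [zfin [zdisj hz]]] := hrep N.+1 1 ltr01.
have hZ := (hz (fun _ => 1)).1; rewrite lsnorm_ones // in hZ.
set c := (N.+1)%:R `^ einv p in hZ *.
have c0 : 0 < c by apply: powR_gt0; rewrite ltr0n.
have : ((c / 2)%:E < U_norm joinY (fun k => (\sum_(i < N.+1) 1 * z i k)%R))%E.
  apply: lt_le_trans hZ; rewrite lte_fin; lra.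
move/ereal_sup_gt => [_ [m _ <-]].
move/ereal_sup_gt => [_ [y hy <-]]; rewrite lte_fin => hy2.
exists (fun i => \sum_(j < m) z i j *: y j); split; [|split].
- move=> i.
  have e : (fun k => \sum_(i' < N.+1) (i' == i)%:R * z i' k) = z i.
    apply: funext => k; rewrite (bigD1 i) //= eqxx mul1r big1 ?addr0 //.
    by move=> j /negbTE ->; rewrite mul0r.
  have := (hz (fun j => (j == i)%:R)).2; rewrite lsnorm_delta // e mulr1 => h.
  have := le_trans (U_n_ge (fun j : 'I_m => z i j) hy) (le_trans (U_n_le_U _ _ _) h).
  by rewrite lee_fin.
- move=> i i' ii'; apply: (ldisj_sum HY) => j j' _ _.
  case: (eqVneq j j') => [<-|jj'].
    case: (min_norm0 (zdisj i i' ii' j)) => ->; rewrite scale0r;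
      [exact: (ldisj0 HY)| apply: (ldisj_sym HY); exact: (ldisj0 HY)].
  by apply: (disj_scale2 HY); apply: hy.1.
- suff -> : \sum_i \sum_(j < m) z i j *: y j =
           \sum_(j < m) (\sum_(i < N.+1) 1 * z i j) *: y j by [].
  rewrite exchange_big; apply: eq_bigr => j _ /=; rewrite scaler_suml.
  by apply: eq_bigr => i _; rewrite mul1r.
Qed.

Lemma einv_ge0 (R : realType) (r : \bar R) : (1 <= r)%E -> 0 <= einv r.
Proof.
case: r => [r||] //=; rewrite lee_fin => h.
by rewrite invr_ge0; apply: le_trans h.
Qed.

Lemma Xside (R : realType) (X : completeNormedModType R)
  (leX : X -> X -> Prop) (joinX : X -> X -> X) (HX : banach_lattice leX joinX)
  (q : \bar R) (hq : (1 <= q)%E) (hrep : fin_lat_rep q (L_norm joinX)) (N : nat) :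
  exists (K : nat) (v : 'I_K -> 'I_N.+1 -> X),
    (forall k, pairwise_disjoint joinX (v k)) /\
    (forall i, 2^-1 < \sum_k `|v k i|) /\
    \sum_k `|\sum_i v k i| <= 4 * (N.+1)%:R `^ einv q.
Proof.
have [w [wfin [wdisj hw]]] := hrep N.+1 1 ltr01.
set c := (N.+1)%:R `^ einv q.
have eq0 : 0 <= einv q := einv_ge0 hq.
have c1 : 1 <= c.
  have := @ler_powR R (N.+1)%:R (_ : 1 <= (N.+1)%:R) 0 (einv q) eq0.
  by rewrite powRr0; apply; rewrite ler1n.
pose Wf k := (\sum_(i < N.+1) 1 * w i k)%R.
have hW := (hw (fun _ => 1)).2; rewrite lsnorm_ones // -/c in hW.
have hwi : forall i, exists M, ((2^-1)%:E < L_n_norm joinX (fun j : 'I_M => w i j))%E.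
  move=> i.
  have e : (fun k => \sum_(i' < N.+1) (i' == i)%:R * w i' k) = w i.
    apply: funext => k; rewrite (bigD1 i) //= eqxx mul1r big1 ?addr0 //.
    by move=> j /negbTE ->; rewrite mul0r.
  have := (hw (fun j => (j == i)%:R)).1; rewrite lsnorm_delta // e => h.
  have : ((2^-1)%:E < L_norm joinX (w i))%E by apply: lt_le_trans h; rewrite lte_fin; lra.
  by move/ereal_sup_gt => [_ [M _ <-]] hM; exists M.
have [Mf hMf] := fin_all_exists hwi.
pose M := (\max_(i < N.+1) Mf i)%N.
have hM i : ((2^-1)%:E < L_n_norm joinX (fun j : 'I_M => w i j))%E.
  exact: (lt_le_trans (hMf i) (L_mono HX (@leq_bigmax _ Mf i) (w i))).
have : (L_n_norm joinX (fun j : 'I_M => Wf j) < ((1 + 1) * c + 1)%:E)%E.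
  apply: le_lt_trans (L_n_le_L _ _ _) _; apply: le_lt_trans hW _.
  by rewrite lte_fin; lra.
move/ereal_inf_lt => [_ [K [F [hF ->]]]] hsum.
have hF' : forall j : 'I_M, Wf j = \sum_k F k j := hF.
have Phifin k : Phi_n joinX (F k) \is a fin_num.
  rewrite ge0_fin_numE ?Phi_ge0 //; apply: le_lt_trans _ (lt_trans hsum (ltry _)).
  rewrite (bigD1 k) //=; apply: leeDl; apply: sume_ge0 => k' _; exact: Phi_ge0.
pose phi k := fine (Phi_n joinX (F k)).
have ephi k : Phi_n joinX (F k) = (phi k)%:E by rewrite /phi fineK.
have hsum' : \sum_k phi k < (1 + 1) * c + 1.
  by move: hsum; rewrite (eq_bigr _ (fun k _ => ephi k)) sumEFin lte_fin.
pose eta := ((K.+1)%:R : R)^-1.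
have eta0 : 0 < eta by rewrite invr_gt0 ltr0n.
have hx : forall k, exists x : 'I_M -> X,
    Bn joinX x /\ `|\sum_j F k j *: x j| < phi k + eta.
  move=> k; have : (Phi_n joinX (F k) < (phi k + eta)%:E)%E.
    by rewrite ephi lte_fin ltrDl.
  by move/ereal_inf_lt => [_ [x hx <-]]; rewrite lte_fin => h; exists x.
have [xx hxx] := fin_all_exists hx.
pose g (j : 'I_M) : 'I_N.+1 := if [pick i | w i j != 0] is Some i then i else ord0.
have gW : forall (j : 'I_M) i, Wf j * (g j == i)%:R = w i j.
  move=> j i; rewrite /g; case: pickP => [i0 hi0 | hnone].
    have others : forall i', i' != i0 -> w i' j = 0.
      move=> i' ii'; have := wdisj i0 i'; rewrite eq_sym => /(_ ii') /(_ j).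
      by case/min_norm0 => // h0; move: hi0; rewrite h0 eqxx.
    have eW : Wf j = w i0 j.
      rewrite /Wf (bigD1 i0) //= mul1r big1 ?addr0 // => i' /others ->.
      by rewrite mulr0.
    case: (eqVneq i0 i) => [e|ne]; first by rewrite -e mulr1 eW.
    by rewrite mulr0 others // eq_sym.
  have h0 : forall i', w i' j = 0 by move=> i'; have := hnone i'; move/negbFE/eqP.
  by rewrite /Wf big1 ?mul0r ?h0 // => i' _; rewrite h0 mulr0.
pose v k i := \sum_(j < M) ((g j == i)%:R * F k j) *: xx k j.
have sumv k : \sum_i v k i = \sum_j F k j *: xx k j.
  rewrite exchange_big; apply: eq_bigr => j _ /=; rewrite -scaler_suml.
  congr (_ *: _); rewrite -mulr_suml (bigD1 (g j)) //= eqxx /= mulr1n big1 ?addr0 ?mul1r //.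
  by move=> i; rewrite eq_sym => /negbTE ->.
exists K, v; split; [|split].
- move=> k i i' ii'; apply: (ldisj_sum HX) => j j' _ _.
  case: (eqVneq j j') => [<-|jj'].
    case: (eqVneq (g j) i) => [gi|gi].
      have : (g j == i') = false by rewrite gi (negbTE ii').
      move=> ->; rewrite mul0r scale0r; apply: (ldisj_sym HX); exact: (ldisj0 HX).
    by rewrite mul0r scale0r; exact: (ldisj0 HX).
  by apply: (disj_scale2 HX); apply: (hxx k).1.1.
- move=> i.
  have : ((2^-1)%:E < (\sum_k `|v k i|)%:E)%E.
    apply: (lt_le_trans (hM i)).
    have hdec : forall j : 'I_M, w i j = \sum_k (fun k (j : 'I_M) => (g j == i)%:R * F k j) k j.
      by move=> j /=; rewrite -gW hF' mulr_suml; apply: eq_bigr => k _; rewrite mulrC.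
    apply: (le_trans (@L_n_le _ _ joinX M (fun j : 'I_M => w i j) K _ hdec)).
    rewrite -sumEFin; apply: lee_sum => k _; exact: Phi_le (hxx k).1.
  by rewrite lte_fin.
- rewrite (eq_bigr _ (fun k _ => congr1 Num.norm (sumv k))).
  apply: le_trans (ler_sum _ (fun k _ => ltW (hxx k).2)) _.
  rewrite big_split /= sumr_const card_ord -mulr_natl.
  have : K%:R * eta <= 1 by rewrite ler_pdivrMr ?ltr0n // mul1r ler_nat.
  lra.
Qed.

Unset Implicit Arguments.

Theorem mainTheorem13 (R : realType) (X Y : completeNormedModType R)
  (leX : X -> X -> Prop) (joinX : X -> X -> X)
  (leY : Y -> Y -> Prop) (joinY : Y -> Y -> Y)
  (HX : banach_lattice leX joinX) (HY : banach_lattice leY joinY)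
  (HXinf : infinite_dim X) (HYinf : infinite_dim Y)
  (s p q : \bar R) (hs : (1 <= s)%E) (hp : (1 <= p)%E) (hq : (1 <= q)%E) :
  rel_decomposable joinX joinY s ->
  fin_lat_rep p (U_norm joinY) ->
  fin_lat_rep q (L_norm joinX) ->
  einv p <= einv q + einv s.
Proof.
move=> [D hD] hYrep hXrep.
have key : forall N : nat, (N.+1)%:R `^ einv p / 2 <
    `|D| * (4 * (N.+1)%:R `^ einv s) * (4 * (N.+1)%:R `^ einv q).
  move=> N; have [u [hu [ud hsum]]] := Yside HY hp hYrep N.
  have [K [v [vd [hc hv]]]] := Xside HX hq hXrep N.
  have := combine HX HY hs hD (ltn0Sn N) hu ud vd hc.
  move=> h; apply: (lt_le_trans hsum); apply: (le_trans h).
  by apply: ler_wpM2l => //; apply: mulr_ge0 => //; apply: mulr_ge0 => //; exact: powR_ge0.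
rewrite leNgt; apply/negP => hlt.
set d := einv p - (einv q + einv s).
have d0 : 0 < d by rewrite subr_gt0.
set C := 32 * `|D| + 1.
have C0 : 0 < C by rewrite /C; apply: ltr_wpDl => //; apply: mulr_ge0.
pose N := Num.trunc (C `^ d^-1).
have hn : C `^ d^-1 < (N.+1)%:R := truncnS_gt _.
set n := (N.+1)%:R : R.
have n0 : 0 < n by rewrite ltr0n.
have hnd : C <= n `^ d.
  have h1 : C `^ d^-1 \is Num.nneg by rewrite nnegrE powR_ge0.
  have h2 : n \is Num.nneg by rewrite nnegrE ltW.
  have := @ge0_ler_powR R d (ltW d0) (C `^ d^-1) n h1 h2 (ltW hn).
  by rewrite -powRrM mulVf ?gt_eqF // powRr1 // ltW.
have := key N; rewrite -/n.
set P := n `^ (einv q + einv s).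
have P0 : 0 < P by apply: powR_gt0.
have -> : n `^ einv p = n `^ d * P.
  rewrite /P -powRD; first by rewrite /d subrK.
  by apply/implyP => _; exact: lt0r_neq0 n0.
have -> : `|D| * (4 * n `^ einv s) * (4 * n `^ einv q) = 16 * (`|D| * P).
  rewrite /P powRD; last by apply/implyP => _; exact: lt0r_neq0 n0.
  ring.
have h1 : C * P <= n `^ d * P by apply: ler_wpM2r => //; exact: ltW.
rewrite /C in h1.
nra.
Qed.
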